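(* Let $\mathcal{G}$ be the real Lie algebra with basis $X_1,X_2,X_3$ and brackets $[X_1,X_2]=-X_2-X_3$, $[X_2,X_3]=0$, $[X_3,X_1]=X_2+X_3$ (Bianchi type $III$). Every real Manin triple $(\mathcal{D},\mathcal{G}',\tilde{\mathcal{G}}')$ with $\mathcal{G}'\cong\mathcal{G}$ is isomorphic to exactly one Manin triple $(\mathcal{D},\mathcal{G},\tilde{\mathcal{G}})$ in which $\tilde{\mathcal{G}}$, in the basis $\tilde X^1,\tilde X^2,\tilde X^3$ dual to $X_1,X_2,X_3$, has one of the following bracket structures: (a) (Bianchi $I$) all brackets zero; (b) (Bianchi $II$) $[\tilde X^1,\tilde X^2]=0$, $[\tilde X^2,\tilde X^3]=\tilde X^1$, $[\tilde X^3,\tilde X^1]=0$; (c) (Bianchi $III$) (i) $[\tilde X^1,\tilde X^2]=-b(\tilde X^2+\tilde X^3)$, $[\tilde X^2,\tilde X^3]=0$, $[\tilde X^3,\tilde X^1]=b(\tilde X^2+\tilde X^3)$, $b\in\mathbb{R}\setminus\{0\}$; (ii) $[\tilde X^1,\tilde X^2]=0$, $[\tilde X^2,\tilde X^3]=\tilde X^2+\tilde X^3$, $[\tilde X^3,\tilde X^1]=0$; (iii) $[\tilde X^1,\tilde X^2]=\tilde X^1$, $[\tilde X^2,\tilde X^3]=0$, $[\tilde X^3,\tilde X^1]=-\tilde X^1$.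
   Context: A real Manin triple $(\mathcal{D},\mathcal{G},\tilde{\mathcal{G}})$ consists of a real Lie algebra $\mathcal{D}$ with a symmetric, ad-invariant, nondegenerate bilinear form $\langle\cdot,\cdot\rangle$, and two maximally isotropic Lie subalgebras $\mathcal{G},\tilde{\mathcal{G}}$ with $\mathcal{D}=\mathcal{G}\oplus\tilde{\mathcal{G}}$ as vector spaces; here $\dim\mathcal{D}=6$, $\dim\mathcal{G}=\dim\tilde{\mathcal{G}}=3$. Bases $X_i$ of $\mathcal{G}$ and $\tilde X^i$ of $\tilde{\mathcal{G}}$ are dual if $\langle X_i,X_j\rangle=0$, $\langle X_i,\tilde X^j\rangle=\delta_i^j$, $\langle\tilde X^i,\tilde X^j\rangle=0$. If $[X_i,X_j]=f_{ij}{}^kX_k$ and $[\tilde X^i,\tilde X^j]=\tilde f^{ij}{}_k\tilde X^k$, ad-invariance forces $[X_i,\tilde X^j]=f_{ki}{}^j\tilde X^k+\tilde f^{jk}{}_iX_k$, so the triple is determined by the brackets of $\mathcal{G}$ and $\tilde{\mathcal{G}}$ in dual bases. Two Manin triples are isomorphic if there is a Lie algebra isomorphism of the doubles preserving the bilinear forms and mapping first subalgebra to first subalgebra and second to second; equivalently, they are related by a change of basis $X_i'=X_kA^k{}_i$, $\tilde X'^j=(A^{-1})^j{}_k\tilde X^k$. Different values of the parameter $b$ give non-isomorphic triples. *)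

(* Defs.v *)
From HB Require Import structures.
From mathcomp Require Import all_boot all_order all_algebra.
From mathcomp Require Import reals.
Set Implicit Arguments. Unset Strict Implicit. Unset Printing Implicit Defensive.
Import Order.TTheory GRing.Theory Num.Theory.
Local Open Scope ring_scope.

Section Defs.
Variable R : realType.

(* sc i j k = f_{ij}^k : [X_i, X_j] = sum_k f_{ij}^k X_k  (indices 0,1,2 = 1,2,3) *)
Definition sc := 'I_3 -> 'I_3 -> 'I_3 -> R.

(* basis of the double D = G (+) G~ : inl i = X_i, inr i = X~^i *)
Definition B := ('I_3 + 'I_3)%type.

(* Bracket structure constants of D determined by f (on G) and ft (on G~),
   ft i j k = ft^{ij}_k, with
   [X_i, X~^j] = f_{ki}^j X~^k + ft^{jk}_i X_k. *)
Definition double_sc (f ft : sc) (a b c : B) : R :=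
  match a, b, c with
  | inl i, inl j, inl k => f i j k
  | inl _, inl _, inr _ => 0
  | inr i, inr j, inr k => ft i j k
  | inr _, inr _, inl _ => 0
  | inl i, inr j, inl k => ft j k i
  | inl i, inr j, inr k => f k i j
  | inr j, inl i, inl k => - ft j k i
  | inr j, inl i, inr k => - f k i j
  end.

Definition form (a b : B) : R :=
  match a, b with
  | inl i, inr j => (i == j)%:R
  | inr i, inl j => (i == j)%:R
  | _, _ => 0
  end.

Definition is_lie {T : finType} (F : T -> T -> T -> R) : Prop :=
  (forall a c, F a a c = 0) /\
  (forall a b c m,
     \sum_(l : T) (F a b l * F l c m + F b c l * F l a m + F c a l * F l b m) = 0).

Definition ad_invariant {T : finType} (F : T -> T -> T -> R) (g : T -> T -> R) : Prop :=
  forall a b c, \sum_(l : T) (F a b l * g l c + F a c l * g b l) = 0.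

(* (D, G, G~) with dual bases X_i, X~^i and brackets f, ft is a Manin triple.
   (Nondegeneracy of the form, maximal isotropy of G, G~ and D = G (+) G~ hold
   by construction; G, G~ are subalgebras by construction of the bracket.) *)
Definition manin_triple (f ft : sc) : Prop :=
  is_lie (double_sc f ft) /\ ad_invariant (double_sc f ft) form.

(* change of basis X'_i = X_k A^k_i : new structure constants *)
Definition transf (A : 'M[R]_3) (f : sc) : sc := fun i j n =>
  \sum_(k < 3) \sum_(l < 3) \sum_(m < 3) A k i * A l j * f k l m * invmx A n m.

(* dual change of basis X~'^j = (A^-1)^j_k X~^k *)
Definition transft (A : 'M[R]_3) (ft : sc) : sc := fun i j n =>
  \sum_(k < 3) \sum_(l < 3) \sum_(m < 3)
     invmx A i k * invmx A j l * ft k l m * A m n.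

Definition lie_isomorphic (f1 f2 : sc) : Prop :=
  exists A : 'M[R]_3, A \in unitmx /\ forall i j n, f2 i j n = transf A f1 i j n.

Definition manin_isomorphic (f1 ft1 f2 ft2 : sc) : Prop :=
  exists A : 'M[R]_3, A \in unitmx /\
    (forall i j n, f2 i j n = transf A f1 i j n) /\
    (forall i j n, ft2 i j n = transft A ft1 i j n).

Definition vec3 (a b c : R) (k : 'I_3) : R :=
  match nat_of_ord k with O => a | S O => b | _ => c end.

Definition sc_of (c12 c23 c31 : 'I_3 -> R) : sc := fun i j k =>
  match nat_of_ord i, nat_of_ord j with
  | O, S O => c12 k
  | S O, O => - c12 k
  | S O, S (S O) => c23 k
  | S (S O), S O => - c23 k
  | S (S O), O => c31 k
  | O, S (S O) => - c31 k
  | _, _ => 0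
  end.

Definition zero3 : 'I_3 -> R := vec3 0 0 0.

Definition bianchiIII : sc :=
  sc_of (vec3 0 (-1) (-1)) zero3 (vec3 0 1 1).

Inductive dual_case :=
  | CaseI
  | CaseII
  | CaseIIIi of R
  | CaseIIIii
  | CaseIIIiii.

Definition dual_case_ok (t : dual_case) : Prop :=
  match t with CaseIIIi b => b <> 0 | _ => True end.

Definition dual_sc (t : dual_case) : sc :=
  match t with
  | CaseI => sc_of zero3 zero3 zero3
  | CaseII => sc_of zero3 (vec3 1 0 0) zero3
  | CaseIIIi b => sc_of (vec3 0 (- b) (- b)) zero3 (vec3 0 b b)
  | CaseIIIii => sc_of zero3 (vec3 0 1 1) zero3
  | CaseIIIiii => sc_of (vec3 1 0 0) zero3 (vec3 (-1) 0 0)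
  end.

End Defs.

(* Main.v *)
Require Import Defs.
From mathcomp Require Import all_boot all_order all_algebra.
From mathcomp Require Import reals.
From mathcomp Require Import ring lra.
From Stdlib Require Import FunctionalExtensionality.
Set Implicit Arguments. Unset Strict Implicit. Unset Printing Implicit Defensive.
Import GRing.Theory Num.Theory.
Local Open Scope ring_scope.

Section S.
Variable R : realType.

Definition i0 : 'I_3 := @Ordinal 3 0 isT.
Definition i1 : 'I_3 := @Ordinal 3 1 isT.
Definition i2 : 'I_3 := @Ordinal 3 2 isT.

Lemma sum3 (G : 'I_3 -> R) : \sum_(i < 3) G i = G i0 + G i1 + G i2.
Proof.
rewrite !big_ord_recl big_ord0 addr0 addrA.
have -> : lift ord0 ord0 = i1 :> 'I_3 by apply: val_inj.
have -> : lift ord0 (lift ord0 ord0) = i2 :> 'I_3 by apply: val_inj.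
by have -> : ord0 = i0 :> 'I_3 by apply: val_inj.
Qed.

Lemma ord3_cases (i : 'I_3) : i = i0 \/ i = i1 \/ i = i2.
Proof.
case: i => [[|[|[|k]]] Hk].
- by left; apply: val_inj.
- by right; left; apply: val_inj.
- by right; right; apply: val_inj.
- by [].
Qed.

Lemma sum_delta (T : finType) (G : T -> R) m :
  \sum_n G n * (m == n)%:R = G m.
Proof.
rewrite (bigD1 m) //= eqxx mulr1 big1 ?addr0 // => n /negbTE.
by rewrite eq_sym => ->; rewrite mulr0.
Qed.

Lemma sum_delta' (T : finType) (G : T -> R) m :
  \sum_n G n * (n == m)%:R = G m.
Proof.
by under eq_bigr do rewrite eq_sym; apply: sum_delta.
Qed.

Lemma sum_deltaL (T : finType) (G : T -> R) m :
  \sum_n (m == n)%:R * G n = G m.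
Proof. under eq_bigr do rewrite mulrC. exact: sum_delta. Qed.

Lemma sum_deltaL' (T : finType) (G : T -> R) m :
  \sum_n (n == m)%:R * G n = G m.
Proof. under eq_bigr do rewrite mulrC. exact: sum_delta'. Qed.

Lemma mul3rev (a b c : R) : a * b * c = c * b * a.
Proof. by ring. Qed.

Lemma sum_delta'' (T : finType) (G : T -> R) m :
  \sum_n G n * (n == m)%:R = G m.
Proof. exact: sum_delta'. Qed.

Lemma mx1E (n : nat) (i j : 'I_n) : (1%:M : 'M[R]_n) i j = (i == j)%:R.
Proof. by rewrite mxE. Qed.

Lemma mulmx_sum (n : nat) (A B : 'M[R]_n) i j : \sum_k A i k * B k j = (A *m B) i j.
Proof. by rewrite mxE. Qed.

Definition relf (S : 'M[R]_3) (f1 f2 : sc R) := forall i j m,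
  \sum_k \sum_l S k i * S l j * f1 k l m = \sum_n f2 i j n * S m n.

Lemma transfE (S : 'M[R]_3) (f : sc R) i j n : transf S f i j n =
  \sum_(k < 3) \sum_(l < 3) \sum_(m < 3) S k i * S l j * f k l m * invmx S n m.
Proof. by []. Qed.

Lemma transftE (S : 'M[R]_3) (f : sc R) i j n : transft S f i j n =
  \sum_(k < 3) \sum_(l < 3) \sum_(m < 3) invmx S i k * invmx S j l * f k l m * S m n.
Proof. by []. Qed.

Lemma transf_relf S f1 f2 : S \in unitmx ->
  (forall i j n, f2 i j n = transf S f1 i j n) -> relf S f1 f2.
Proof.
move=> Su E i j m; apply/esym.
under eq_bigr => n _ do [rewrite E transfE mulr_suml; under eq_bigr => k _ do
  [rewrite mulr_suml; under eq_bigr => l _ do rewrite mulr_suml]].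
rewrite exchange_big /=; apply: eq_bigr => k _.
rewrite exchange_big /=; apply: eq_bigr => l _.
rewrite exchange_big /=.
under eq_bigr => m' _ do [under eq_bigr => n _ do rewrite -mulrA [invmx S _ _ * _]mulrC;
  rewrite -mulr_sumr mulmx_sum mulmxV // mx1E].
by rewrite sum_delta.
Qed.

Lemma swap3 (F : 'I_3 -> 'I_3 -> 'I_3 -> R) :
  \sum_k \sum_l \sum_m F k l m = \sum_m \sum_k \sum_l F k l m.
Proof. under eq_bigr do rewrite exchange_big. by rewrite exchange_big. Qed.

Lemma swap4 (F : 'I_3 -> 'I_3 -> 'I_3 -> 'I_3 -> R) :
  \sum_k \sum_l \sum_a \sum_b F k l a b = \sum_a \sum_b \sum_k \sum_l F k l a b.
Proof.
under eq_bigr do rewrite exchange_big. rewrite exchange_big.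
under eq_bigr do (under eq_bigr do rewrite exchange_big).
by under eq_bigr do rewrite exchange_big.
Qed.

Lemma prod2 (X Y : 'I_3 -> R) Z :
  (\sum_a X a) * (\sum_b Y b) * Z = \sum_a \sum_b X a * Y b * Z.
Proof.
rewrite mulr_suml mulr_suml; apply: eq_bigr => a _.
by rewrite mulr_sumr mulr_suml.
Qed.

Lemma sum_mull2 (T : finType) (F : T -> T -> R) y :
  (\sum_a \sum_b F a b) * y = \sum_a \sum_b F a b * y.
Proof. rewrite mulr_suml; apply: eq_bigr => a _; by rewrite mulr_suml. Qed.

Lemma sum_mulr2 (T : finType) (F : T -> T -> R) y :
  y * (\sum_a \sum_b F a b) = \sum_a \sum_b y * F a b.
Proof. rewrite mulr_sumr; apply: eq_bigr => a _; by rewrite mulr_sumr. Qed.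

Lemma relf_transf S f1 f2 : S \in unitmx -> relf S f1 f2 ->
  forall i j n, f2 i j n = transf S f1 i j n.
Proof.
move=> Su H i j n; rewrite transfE swap3.
transitivity (\sum_m (\sum_k \sum_l S k i * S l j * f1 k l m) * invmx S n m); last first.
  by apply: eq_bigr => m _; rewrite sum_mull2.
under eq_bigr => m _ do rewrite H mulr_suml.
rewrite exchange_big /=.
under eq_bigr => p _ do [under eq_bigr => m _ do rewrite mul3rev;
  rewrite -mulr_suml mulmx_sum mulVmx // mx1E].
by rewrite sum_deltaL.
Qed.

Lemma relf_comp S T f1 f2 f3 : relf S f1 f2 -> relf T f2 f3 -> relf (S *m T) f1 f3.
Proof.
move=> H1 H2 i j m.
transitivity (\sum_a \sum_b T a i * T b j * (\sum_k \sum_l S k a * S l b * f1 k l m)).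
  under eq_bigr => k _ do under eq_bigr => l _ do rewrite !mxE prod2.
  rewrite swap4; apply: eq_bigr => a _; apply: eq_bigr => b _.
  rewrite sum_mulr2; apply: eq_bigr => k _; apply: eq_bigr => l _; ring.
under eq_bigr => a _ do under eq_bigr => b _ do rewrite H1 mulr_sumr.
rewrite swap3.
transitivity (\sum_n S m n * (\sum_a \sum_b T a i * T b j * f2 a b n)).
  apply: eq_bigr => n _; rewrite sum_mulr2; apply: eq_bigr => a _; apply: eq_bigr => b _; ring.
under eq_bigr => n _ do rewrite H2 mulr_sumr.
rewrite exchange_big /=; apply: eq_bigr => p _.
rewrite mxE mulr_sumr; apply: eq_bigr => n _; ring.
Qed.

Lemma relf1 f g : relf 1%:M f g -> forall i j m, f i j m = g i j m.
Proof.
move=> H i j m; have := H i j m.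
under eq_bigr => k _ do under eq_bigr => l _ do rewrite !mx1E -mulrA.
under eq_bigr => k _ do rewrite -mulr_sumr sum_deltaL'.
rewrite sum_deltaL'.
under eq_bigr => n _ do rewrite mx1E.
by rewrite sum_delta.
Qed.

Lemma relf_inv S f1 f2 : S \in unitmx -> relf S f1 f2 -> relf (invmx S) f2 f1.
Proof.
move=> Su H.
have Siu : invmx S \in unitmx by rewrite unitmx_inv.
have H2 : relf (invmx S) f2 (transf (invmx S) f2) by apply: transf_relf.
have := relf_comp H H2; rewrite mulmxV // => /relf1 E.
have -> : f1 = transf (invmx S) f2.
  by apply: functional_extensionality => i; apply: functional_extensionality => j;
     apply: functional_extensionality => m; apply: E.
exact: H2.
Qed.


Lemma transft_transf (S : 'M[R]_3) (ft : sc R) i j n : transft S ft i j n = transf (invmx S)^T ft i j n.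
Proof.
rewrite transftE transfE -trmx_inv invmxK.
apply: eq_bigr => k _; apply: eq_bigr => l _; apply: eq_bigr => m _.
by rewrite !mxE.
Qed.

Lemma transft_relf (S : 'M[R]_3) (ft1 ft2 : sc R) : S \in unitmx ->
  (forall i j n, ft2 i j n = transft S ft1 i j n) -> relf S^T ft2 ft1.
Proof.
move=> Su E.
have U : (invmx S)^T \in unitmx by rewrite unitmx_tr unitmx_inv.
have H : relf (invmx S)^T ft1 ft2.
  by apply: transf_relf => // i j n; rewrite E transft_transf.
have := relf_inv U H.
by rewrite -trmx_inv invmxK.
Qed.

Lemma relf_transft (S : 'M[R]_3) (ft1 ft2 : sc R) : S \in unitmx -> relf S^T ft2 ft1 ->
  forall i j n, ft2 i j n = transft S ft1 i j n.
Proof.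
move=> Su H i j n.
have U : S^T \in unitmx by rewrite unitmx_tr.
have := relf_inv U H; rewrite -trmx_inv => H2.
rewrite transft_transf; apply: relf_transf => //.
by rewrite unitmx_tr unitmx_inv.
Qed.

Section Generic.
Variable T : finType.
Variables P Q : T -> T -> R.
Hypothesis PQ : forall a b, \sum_m P a m * Q m b = (a == b)%:R.

Definition trF (F : T -> T -> T -> R) i j n :=
  \sum_a \sum_b \sum_c P a i * P b j * F a b c * Q n c.

Lemma contract (X Y : T -> R) :
  \sum_l (\sum_z X z * Q l z) * (\sum_u P u l * Y u) = \sum_z X z * Y z.
Proof.
transitivity (\sum_z \sum_u X z * Y u * (\sum_l P u l * Q l z)).
  under eq_bigr => l _ do rewrite mulr_suml.
  rewrite exchange_big /=; apply: eq_bigr => z _.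
  under eq_bigr => l _ do rewrite mulr_sumr.
  rewrite exchange_big /=; apply: eq_bigr => u _.
  rewrite mulr_sumr; apply: eq_bigr => l _; ring.
apply: eq_bigr => z _.
under eq_bigr => u _ do rewrite PQ.
by rewrite sum_delta'' .
Qed.

Lemma trF_split1 F a b l :
  trF F a b l = \sum_z (\sum_x \sum_y P x a * P y b * F x y z) * Q l z.
Proof.
rewrite /trF; under eq_bigr do rewrite exchange_big; rewrite exchange_big.
apply: eq_bigr => z _; rewrite mulr_suml; apply: eq_bigr => x _; by rewrite mulr_suml.
Qed.

Lemma trF_split2 F l c m :
  trF F l c m = \sum_u P u l * (\sum_v \sum_w P v c * F u v w * Q m w).
Proof.
rewrite /trF; apply: eq_bigr => u _; rewrite sum_mulr2.
apply: eq_bigr => v _; apply: eq_bigr => w _; ring.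
Qed.

Lemma trF_antisym F : (forall a b c, F a b c = - F b a c) ->
  forall a b c, trF F a b c = - trF F b a c.
Proof.
move=> AF a b c; rewrite /trF exchange_big -sumrN; apply: eq_bigr => x _.
rewrite -sumrN; apply: eq_bigr => y _.
rewrite -sumrN; apply: eq_bigr => z _.
rewrite AF; ring.
Qed.

Lemma swap5 (F : T -> T -> T -> T -> T -> R) :
  \sum_z \sum_x \sum_y \sum_v \sum_w F z x y v w =
  \sum_x \sum_y \sum_v \sum_w \sum_z F z x y v w.
Proof.
rewrite exchange_big; apply: eq_bigr => x _.
rewrite exchange_big; apply: eq_bigr => y _.
rewrite exchange_big; apply: eq_bigr => v _.
by rewrite exchange_big.
Qed.

Lemma rot3 (F : T -> T -> T -> R) :
  \sum_x \sum_y \sum_v F x y v = \sum_v \sum_x \sum_y F x y v.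
Proof.
under eq_bigr do rewrite exchange_big.
by rewrite exchange_big.
Qed.

Definition GG (F : T -> T -> T -> R) x y v w := \sum_z F x y z * F z v w.

Lemma trF_prod F a b c m :
  \sum_l trF F a b l * trF F l c m =
  \sum_x \sum_y \sum_v \sum_w P x a * P y b * P v c * Q m w * GG F x y v w.
Proof.
under eq_bigr do rewrite trF_split1 trF_split2.
rewrite contract.
transitivity (\sum_z \sum_x \sum_y \sum_v \sum_w
   P x a * P y b * P v c * Q m w * (F x y z * F z v w)).
  apply: eq_bigr => z _; rewrite sum_mull2; apply: eq_bigr => x _; apply: eq_bigr => y _.
  rewrite mulr_sumr; apply: eq_bigr => v _; rewrite mulr_sumr.
  apply: eq_bigr => w _; ring.
rewrite swap5; apply: eq_bigr => x _; apply: eq_bigr => y _; apply: eq_bigr => v _.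
apply: eq_bigr => w _; rewrite /GG mulr_sumr; apply: eq_bigr => z _; ring.
Qed.

Lemma trF_lie F : (forall a b c, F a b c = - F b a c) -> is_lie F -> is_lie (trF F).
Proof.
move=> AF [_ J]; split.
  move=> a c; have := trF_antisym AF a a c; lra.
move=> a b c m.
rewrite big_split big_split /= !trF_prod.
rewrite [X in _ + X + _]rot3 [X in _ + _ + X]rot3 [X in _ + _ + X]rot3.
transitivity (\sum_x \sum_y \sum_v \sum_w P x a * P y b * P v c * Q m w *
   (GG F x y v w + GG F y v x w + GG F v x y w)).
  symmetry.
  under eq_bigr => x _ do under eq_bigr => y _ do under eq_bigr => v _ do
    (under eq_bigr => w _ do rewrite !mulrDr; rewrite big_split big_split /=).
  under eq_bigr => x _ do under eq_bigr => y _ do rewrite big_split big_split /=.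
  under eq_bigr => x _ do rewrite big_split big_split /=.
  rewrite big_split big_split /=.
  congr (_ + _ + _).
  - apply: eq_bigr => x _; apply: eq_bigr => y _; apply: eq_bigr => v _;
    apply: eq_bigr => w _; ring.
  - apply: eq_bigr => x _; apply: eq_bigr => y _; apply: eq_bigr => v _;
    apply: eq_bigr => w _; ring.
apply: big1 => x _; apply: big1 => y _; apply: big1 => v _; apply: big1 => w _.
have := J x y v w; rewrite /GG -!big_split /= => ->.
by rewrite mulr0.
Qed.
End Generic.

Section Double.
Variable A : 'M[R]_3.
Hypothesis Au : A \in unitmx.

Definition Pd (a b : B) : R :=
  match a, b with
  | inl k, inl i => A k i
  | inr k, inr j => invmx A j k
  | _, _ => 0
  end.

Definition Qd (n c : B) : R :=
  match n, c with
  | inl n, inl c => invmx A n c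
  | inr n, inr c => A c n
  | _, _ => 0
  end.

Lemma sumB (G : B -> R) : \sum_(a : B) G a = \sum_(a < 3) G (inl a) + \sum_(a < 3) G (inr a).
Proof. by rewrite big_sumType. Qed.

Lemma sum0 (T : finType) : \sum_(a : T) (0 : R) = 0.
Proof. by rewrite big1. Qed.

Lemma PdQd : forall a b, \sum_m Pd a m * Qd m b = (a == b)%:R.
Proof.
case=> k; case=> c; rewrite sumB /=.
- by rewrite mul0r sum0 addr0 mulmx_sum mulmxV // mx1E.
- under eq_bigr do rewrite mulr0; rewrite sum0 add0r.
  by under eq_bigr do rewrite mul0r; rewrite sum0.
- under eq_bigr do rewrite mul0r; rewrite sum0 add0r.
  by under eq_bigr do rewrite mulr0; rewrite sum0.
- rewrite mul0r sum0 add0r.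
  under eq_bigr do rewrite mulrC. by rewrite mulmx_sum mulmxV // mx1E eq_sym.
Qed.


Definition emb (x : B) (a : 'I_3) : B := match x with inl _ => inl a | inr _ => inr a end.
Definition pc (x : B) (a : 'I_3) : R := match x with inl i => A a i | inr j => invmx A j a end.
Definition qc (z : B) (c : 'I_3) : R := match z with inl n => invmx A n c | inr n => A c n end.

Lemma sumP_emb (G : B -> R) x : \sum_(a : B) Pd a x * G a = \sum_(a < 3) pc x a * G (emb x a).
Proof.
rewrite sumB; case: x => i /=.
- by under [X in _ + X]eq_bigr do rewrite mul0r; rewrite sum0 addr0.
- by under eq_bigr do rewrite mul0r; rewrite sum0 add0r.
Qed.

Lemma sumQ_emb (G : B -> R) z : \sum_(c : B) G c * Qd z c = \sum_(c < 3) G (emb z c) * qc z c.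
Proof.
rewrite sumB; case: z => i /=.
- by under [X in _ + X]eq_bigr do rewrite mulr0; rewrite sum0 addr0.
- by under eq_bigr do rewrite mulr0; rewrite sum0 add0r.
Qed.

Lemma trF_emb F x y z : trF Pd Qd F x y z =
  \sum_a \sum_b \sum_c pc x a * pc y b * F (emb x a) (emb y b) (emb z c) * qc z c.
Proof.
rewrite /trF.
transitivity (\sum_(a : B) Pd a x * (\sum_(b : B) Pd b y * (\sum_(c : B) F a b c * Qd z c))).
  apply: eq_bigr => a _; rewrite mulr_sumr; apply: eq_bigr => b _.
  rewrite !mulr_sumr; apply: eq_bigr => c _; ring.
rewrite sumP_emb; apply: eq_bigr => a _.
rewrite sumP_emb mulr_sumr; apply: eq_bigr => b _.
rewrite sumQ_emb mulr_sumr mulr_sumr; apply: eq_bigr => c _; ring.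
Qed.


Ltac tri := rewrite -?sumrN; apply: eq_bigr => ? _; rewrite -?sumrN; apply: eq_bigr => ? _;
  rewrite -?sumrN; apply: eq_bigr => ? _; ring.

Lemma zero3s (G : 'I_3 -> 'I_3 -> 'I_3 -> R) : (forall a b c, G a b c = 0) ->
  \sum_a \sum_b \sum_c G a b c = 0.
Proof.
move=> H; apply: big1 => a _; apply: big1 => b _; apply: big1 => c _; exact: H.
Qed.

Lemma double_tr (f ft : sc R) x y z :
  double_sc (transf A f) (transft A ft) x y z = trF Pd Qd (double_sc f ft) x y z.
Proof.
rewrite trF_emb; case: x => i; case: y => j; case: z => n /=.
- rewrite transfE; tri.
- by rewrite zero3s // => a b c; rewrite mulr0 mul0r.
- rewrite transftE rot3; tri.
- rewrite transfE rot3 rot3; tri.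
- rewrite transftE; under eq_bigr do rewrite exchange_big; tri.
- rewrite transfE rot3; under eq_bigr do rewrite exchange_big; tri.
- by rewrite zero3s // => a b c; rewrite mulr0 mul0r.
- rewrite transftE; tri.
Qed.

End Double.

Lemma sum0l (G : 'I_3 -> R) : \sum_a 0 * G a = 0.
Proof. by apply: big1 => a _; rewrite mul0r. Qed.
Lemma sum0r (G : 'I_3 -> R) : \sum_a G a * 0 = 0.
Proof. by apply: big1 => a _; rewrite mulr0. Qed.

Lemma manin_antisym (f ft : sc R) : manin_triple f ft ->
  forall a b c, double_sc f ft a b c = - double_sc f ft b a c.
Proof.
move=> [_ AI].
have Af : forall i j k, f i j k = - f j i k.
  move=> i j k; have := AI (inl i) (inl j) (inr k).
  rewrite big_split /= !sumB /= !sum0l !sum0r !addr0 add0r.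
  rewrite ?sum_delta ?sum_delta' ?sum_deltaL ?sum_deltaL'.
  move=> H; lra.
have Aft : forall i j k, ft i j k = - ft j i k.
  move=> i j k; have := AI (inl k) (inr i) (inr j).
  rewrite big_split /= !sumB /= ?sum0l ?sum0r ?addr0 ?add0r.
  rewrite ?sum_delta ?sum_delta' ?sum_deltaL ?sum_deltaL'.
  move=> H; lra.
case=> i; case=> j; case=> k /=; rewrite ?oppr0 ?opprK //.
Qed.

Lemma manin_tr (A : 'M[R]_3) (f ft : sc R) : A \in unitmx -> manin_triple f ft ->
  is_lie (double_sc (transf A f) (transft A ft)) /\
  (forall a b c, double_sc (transf A f) (transft A ft) a b c =
                 - double_sc (transf A f) (transft A ft) b a c).
Proof.
move=> Au M.
have AF := manin_antisym M.
have E : double_sc (transf A f) (transft A ft) = trF (Pd A) (Qd A) (double_sc f ft).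
  by apply: functional_extensionality => x; apply: functional_extensionality => y;
     apply: functional_extensionality => z; apply: double_tr.
rewrite E; split.
  apply: trF_lie => //; [exact: PdQd | exact: M.1].
by apply: trF_antisym.
Qed.

End S.

Section C.
Variable R : realType.

Definition ftp (al a be c : R) : sc R :=
  sc_of (vec3 al a a) (vec3 be c c) (vec3 (- al) (- a) (- a)).

Lemma instJ (ft : sc R) x y z w :
  is_lie (double_sc (bianchiIII R) ft) -> 
  \sum_l (double_sc (bianchiIII R) ft x y l * double_sc (bianchiIII R) ft l z w +
          double_sc (bianchiIII R) ft y z l * double_sc (bianchiIII R) ft l x w +
          double_sc (bianchiIII R) ft z x l * double_sc (bianchiIII R) ft l y w) = 0.
Proof. by case=> _ J; apply: J. Qed.

Lemma ft_lin (ft : sc R) : is_lie (double_sc (bianchiIII R) ft) ->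
  (forall a b c, double_sc (bianchiIII R) ft a b c = - double_sc (bianchiIII R) ft b a c) ->
  forall i j n, ft i j n = ftp (ft i0 i1 i0) (ft i0 i1 i1) (ft i1 i2 i0) (ft i1 i2 i1) i j n.
Proof.
move=> L AS.
have := AS (inr i0) (inr i0) (inr i0); rewrite /= => ?.
have := AS (inr i0) (inr i0) (inr i1); rewrite /= => ?.
have := AS (inr i0) (inr i0) (inr i2); rewrite /= => ?.
have := AS (inr i0) (inr i1) (inr i0); rewrite /= => ?.
have := AS (inr i0) (inr i1) (inr i1); rewrite /= => ?.
have := AS (inr i0) (inr i1) (inr i2); rewrite /= => ?.
have := AS (inr i0) (inr i2) (inr i0); rewrite /= => ?.
have := AS (inr i0) (inr i2) (inr i1); rewrite /= => ?.
have := AS (inr i0) (inr i2) (inr i2); rewrite /= => ?.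
have := AS (inr i1) (inr i0) (inr i0); rewrite /= => ?.
have := AS (inr i1) (inr i0) (inr i1); rewrite /= => ?.
have := AS (inr i1) (inr i0) (inr i2); rewrite /= => ?.
have := AS (inr i1) (inr i1) (inr i0); rewrite /= => ?.
have := AS (inr i1) (inr i1) (inr i1); rewrite /= => ?.
have := AS (inr i1) (inr i1) (inr i2); rewrite /= => ?.
have := AS (inr i1) (inr i2) (inr i0); rewrite /= => ?.
have := AS (inr i1) (inr i2) (inr i1); rewrite /= => ?.
have := AS (inr i1) (inr i2) (inr i2); rewrite /= => ?.
have := AS (inr i2) (inr i0) (inr i0); rewrite /= => ?.
have := AS (inr i2) (inr i0) (inr i1); rewrite /= => ?.
have := AS (inr i2) (inr i0) (inr i2); rewrite /= => ?.
have := AS (inr i2) (inr i1) (inr i0); rewrite /= => ?.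
have := AS (inr i2) (inr i1) (inr i1); rewrite /= => ?.
have := AS (inr i2) (inr i1) (inr i2); rewrite /= => ?.
have := AS (inr i2) (inr i2) (inr i0); rewrite /= => ?.
have := AS (inr i2) (inr i2) (inr i1); rewrite /= => ?.
have := AS (inr i2) (inr i2) (inr i2); rewrite /= => ?.
have := instJ (inl i0) (inl i1) (inr i0) (inl i1) L; rewrite sumB !sum3 /= /bianchiIII /sc_of /Defs.zero3 /vec3 /= => ?.
have := instJ (inl i0) (inl i1) (inr i0) (inl i2) L; rewrite sumB !sum3 /= /bianchiIII /sc_of /Defs.zero3 /vec3 /= => ?.
have := instJ (inl i0) (inl i1) (inr i1) (inl i2) L; rewrite sumB !sum3 /= /bianchiIII /sc_of /Defs.zero3 /vec3 /= => ?.
have := instJ (inl i0) (inl i2) (inr i1) (inl i2) L; rewrite sumB !sum3 /= /bianchiIII /sc_of /Defs.zero3 /vec3 /= => ?.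
have := instJ (inl i1) (inl i2) (inr i1) (inl i2) L; rewrite sumB !sum3 /= /bianchiIII /sc_of /Defs.zero3 /vec3 /= => ?.
move=> i j n.
case: (ord3_cases i) => [->|[->|->]]; case: (ord3_cases j) => [->|[->|->]]; case: (ord3_cases n) => [->|[->|->]];
  rewrite /ftp /sc_of /vec3 /=; lra.
Qed.

Lemma ft_quad (ft : sc R) : is_lie (double_sc (bianchiIII R) ft) ->
  (forall a b c, double_sc (bianchiIII R) ft a b c = - double_sc (bianchiIII R) ft b a c) ->
  ft i1 i2 i1 * ft i0 i1 i0 = ft i0 i1 i1 * ft i1 i2 i0.
Proof.
move=> L AS.
have E := ft_lin L AS.
have := instJ (inl i0) (inr i0) (inr i1) (inl i2) L.
have -> : ft = fun i j n => ftp (ft i0 i1 i0) (ft i0 i1 i1) (ft i1 i2 i0) (ft i1 i2 i1) i j n.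
  by apply: functional_extensionality => i; apply: functional_extensionality => j;
     apply: functional_extensionality => n; apply: E.
rewrite sumB !sum3 /= /bianchiIII /ftp /sc_of /Defs.zero3 /vec3 /=.
move=> H; nra.
Qed.

Definition Sm (x y p q : R) : 'M[R]_3 := \matrix_(i < 3, j < 3)
  match nat_of_ord i, nat_of_ord j with
  | 0, 0 => 1 | 0, _ => 0
  | 1, 0 => x | 1, 1 => p | 1, _ => q
  | _, 0 => y | _, 1 => q | _, _ => p end.

Ltac cases3 i j m := case: (ord3_cases i) => [->|[->|->]]; case: (ord3_cases j) => [->|[->|->]];
  case: (ord3_cases m) => [->|[->|->]].

Lemma Sm_aut x y p q : relf (Sm x y p q) (bianchiIII R) (bianchiIII R).
Proof.
move=> i j m; rewrite !sum3; cases3 i j m;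
  rewrite !mxE /= /bianchiIII /sc_of /Defs.zero3 /vec3 /=; ring.
Qed.

Lemma Sm_unit x y p q : p + q != 0 -> p - q != 0 -> Sm x y p q \in unitmx.
Proof.
move=> h1 h2.
have hd : p * p - q * q != 0.
  have -> : p * p - q * q = (p + q) * (p - q) by ring.
  by rewrite mulf_neq0.
set p' := p / (p * p - q * q). set q' := - q / (p * p - q * q).
have [] := @mulmx1_unit _ _ (Sm x y p q) (Sm (- (p' * x + q' * y)) (- (q' * x + p' * y)) p' q').
  apply/matrixP => i j; rewrite mxE sum3.
  case: (ord3_cases i) => [->|[->|->]]; case: (ord3_cases j) => [->|[->|->]];
    rewrite !mxE /= /p' /q'; field; by [].
by [].
Qed.

Ltac relf_tac := let i := fresh in let j := fresh in let m := fresh in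
  move=> i j m; rewrite !sum3; cases3 i j m; rewrite !mxE /= /ftp /sc_of /vec3 /=.

Lemma case1 al a c : a != 0 ->
  relf (Sm ((- al / a + c / a) / 2) ((- al / a - c / a) / 2) 1 0)^T
       (ftp 0 a 0 0) (ftp al a (c * al / a) c).
Proof. by move=> ha; relf_tac; field. Qed.

Lemma case2 al be : al != 0 ->
  relf (Sm ((be / al) / 2) (- (be / al) / 2) ((al + 1) / 2) ((al - 1) / 2))^T
       (ftp 1 0 0 0) (ftp al 0 be 0).
Proof. by move=> ha; relf_tac; field. Qed.

Lemma case3 be c : c != 0 ->
  relf (Sm (- be / (2 * c)) (- be / (2 * c)) ((1 + c) / 2) ((1 - c) / 2))^T
       (ftp 0 0 0 1) (ftp 0 0 be c).
Proof. by move=> ha; relf_tac; field. Qed.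

Lemma case4 be :
  relf (Sm 0 0 ((1 + be) / 2) ((1 - be) / 2))^T (ftp 0 0 1 0) (ftp 0 0 be 0).
Proof. by relf_tac; field. Qed.

Lemma case5 : relf (Sm 0 0 1 0)^T (ftp 0 0 0 0) (ftp 0 0 0 0).
Proof. by relf_tac; field. Qed.

Lemma adinv_double (f ft : sc R) :
  (forall i j k, f i j k = - f j i k) -> (forall i j k, ft i j k = - ft j i k) ->
  ad_invariant (double_sc f ft) (Defs.form R).
Proof.
move=> Af Aft; case=> i; case=> j; case=> k;
  rewrite big_split /= !sumB /= ?sum0l ?sum0r ?addr0 ?add0r ?sum_delta ?sum_delta' ?sum_deltaL ?sum_deltaL' ?addr0 ?add0r //.
all: try (rewrite Af; ring).
all: try (rewrite Aft; ring).
all: try ring.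
Qed.
End C.

Section D.
Variable R : realType.

Lemma funext3 (f g : sc R) : (forall i j n, f i j n = g i j n) -> f = g.
Proof.
move=> H; apply: functional_extensionality => i; apply: functional_extensionality => j;
apply: functional_extensionality => n; apply: H.
Qed.

Lemma sc_of_antisym (c12 c23 c31 : 'I_3 -> R) i j k :
  sc_of c12 c23 c31 i j k = - sc_of c12 c23 c31 j i k.
Proof.
case: (ord3_cases i) => [->|[->|->]]; case: (ord3_cases j) => [->|[->|->]];
  rewrite /sc_of /= ?opprK ?oppr0 //.
Qed.

Lemma dual_ftp (t : dual_case R) : dual_sc t = match t with
  | CaseI => ftp 0 0 0 0 | CaseII => ftp 0 0 1 0 | CaseIIIi b => ftp 0 (- b) 0 0
  | CaseIIIii => ftp 0 0 0 1 | CaseIIIiii => ftp 1 0 0 0 end.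
Proof.
apply: funext3 => i j n; case: t => [| |b| |];
  case: (ord3_cases i) => [->|[->|->]]; case: (ord3_cases j) => [->|[->|->]];
  case: (ord3_cases n) => [->|[->|->]]; rewrite /dual_sc /ftp /sc_of /Defs.zero3 /vec3 /= ?opprK ?oppr0 //.
Qed.


Lemma neqP (x : R) : (x = 0 -> False) -> x != 0.
Proof. by move=> H; apply/eqP. Qed.

Lemma Sm_unit2 (x y l g : R) : l != 0 -> g != 0 -> Sm x y ((l + g) / 2) ((l - g) / 2) \in unitmx.
Proof.
move=> hl hg; apply: Sm_unit.
  by have -> : (l + g) / 2 + (l - g) / 2 = l :> R by field.
by have -> : (l + g) / 2 - (l - g) / 2 = g :> R by field.
Qed.

Lemma finish (f' ft' ft0 : sc R) (A0 S : 'M[R]_3) (t : dual_case R) :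
  manin_triple f' ft' -> A0 \in unitmx -> S \in unitmx ->
  relf A0 f' (bianchiIII R) -> relf A0^T ft0 ft' ->
  relf S (bianchiIII R) (bianchiIII R) -> relf S^T (dual_sc t) ft0 -> dual_case_ok t ->
  exists t, dual_case_ok t /\ manin_triple (bianchiIII R) (dual_sc t) /\
    manin_isomorphic f' ft' (bianchiIII R) (dual_sc t).
Proof.
move=> M U0 US R1 R2 R3 R4 ok.
have UA : A0 *m S \in unitmx by rewrite unitmx_mul U0 US.
have H1 : relf (A0 *m S) f' (bianchiIII R) := relf_comp R1 R3.
have H2 : relf (A0 *m S)^T (dual_sc t) ft'.
  by rewrite trmx_mul; apply: relf_comp R4 R2.
have E1 := relf_transf UA H1.
have E2 := relf_transft UA H2.
exists t; split => //; split; last first.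
  by exists (A0 *m S); split => //; split.
have [L _] := manin_tr UA M.
have Eb : transf (A0 *m S) f' = bianchiIII R by apply: funext3 => i j n; rewrite E1.
have Ed : transft (A0 *m S) ft' = dual_sc t by apply: funext3 => i j n; rewrite E2.
rewrite Eb Ed in L; split => //.
apply: adinv_double => i j k.
  exact: sc_of_antisym.
by case: (t) => *; apply: sc_of_antisym.
Qed.

Lemma existence (f' ft' : sc R) : manin_triple f' ft' -> lie_isomorphic f' (bianchiIII R) ->
  exists t, dual_case_ok t /\ manin_triple (bianchiIII R) (dual_sc t) /\
    manin_isomorphic f' ft' (bianchiIII R) (dual_sc t).
Proof.
move=> M [A0 [U0 E0]].
have [L0 AS0] := manin_tr U0 M.
have Eb : transf A0 f' = bianchiIII R by apply: funext3 => i j n; rewrite E0.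
rewrite Eb in L0 AS0.
have R1 : relf A0 f' (bianchiIII R) := transf_relf U0 E0.
have R2 : relf A0^T (transft A0 ft') ft' := transft_relf U0 (fun i j n => erefl).
move: (transft A0 ft') L0 AS0 R2 => ft0 L0 AS0 R2.
have EQ := ft_lin L0 AS0.
have Q := ft_quad L0 AS0.
move: EQ Q; set al := ft0 i0 i1 i0; set a := ft0 i0 i1 i1;
  set be := ft0 i1 i2 i0; set c := ft0 i1 i2 i1 => EQ Q.
have E := funext3 EQ.
rewrite E in R2.
clearbody al a be c.
have fin := finish M U0 _ R1 R2.
have [ha|ha] := eqVneq a 0; last first.
  have Hbe : be = c * al / a by rewrite Q; field.
  apply: (fin (Sm ((- al / a + c / a) / 2) ((- al / a - c / a) / 2) 1 0) (CaseIIIi (- a))); last by rewrite /=; apply/eqP; rewrite oppr_eq0.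
  - by apply: Sm_unit; rewrite ?addr0 ?subr0 oner_neq0.
  - exact: Sm_aut.
  - rewrite dual_ftp opprK Hbe; exact: case1.
rewrite ha in Q fin => {ha}.
have [hal|hal] := eqVneq al 0; last first.
  have hc : c = 0.
    by move: Q; rewrite mul0r => /eqP; rewrite mulf_eq0 (negbTE hal) orbF => /eqP.
  rewrite hc in fin.
  apply: (fin (Sm ((be / al) / 2) (- (be / al) / 2) ((al + 1) / 2) ((al - 1) / 2)) (@CaseIIIiii R)) => //.
  - by apply: Sm_unit2 => //; rewrite oner_neq0.
  - exact: Sm_aut.
  - rewrite dual_ftp; exact: case2.
rewrite hal in fin => {hal}.
have [hc|hc] := eqVneq c 0; last first.
  apply: (fin (Sm (- be / (2 * c)) (- be / (2 * c)) ((1 + c) / 2) ((1 - c) / 2)) (@CaseIIIii R)) => //.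
  - by apply: Sm_unit2 => //; rewrite oner_neq0.
  - exact: Sm_aut.
  - rewrite dual_ftp; exact: case3.
rewrite hc in fin => {hc}.
have [hb|hb] := eqVneq be 0; last first.
  apply: (fin (Sm 0 0 ((1 + be) / 2) ((1 - be) / 2)) (@CaseII R)) => //.
  - by apply: Sm_unit2 => //; rewrite oner_neq0.
  - exact: Sm_aut.
  - rewrite dual_ftp; exact: case4.
rewrite hb in fin.
apply: (fin (Sm 0 0 1 0) (@CaseI R)) => //.
- by apply: Sm_unit; rewrite ?addr0 ?subr0 oner_neq0.
- exact: Sm_aut.
- rewrite dual_ftp; exact: case5.
Qed.
End D.

Section E.
Variable R : realType.

Lemma coldep (S : 'M[R]_3) r : S \in unitmx -> (forall k, S k i1 = r * S k i2) -> False.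
Proof.
move=> Su H.
have := congr1 (fun M : 'M[R]_3 => M i1 i1) (mulVmx Su).
rewrite /= !mxE /=.
under eq_bigr do rewrite H mulrCA.
rewrite -mulr_sumr mulmx_sum mulVmx // mx1E /= mulr0 => /eqP.
by rewrite eq_sym oner_eq0.
Qed.

Lemma Sstruct (S : 'M[R]_3) : S \in unitmx -> relf S (bianchiIII R) (bianchiIII R) ->
  [/\ S i0 i0 = 1, S i0 i1 = 0, S i0 i2 = 0, S i2 i1 = S i1 i2 & S i2 i2 = S i1 i1] /\
  S i1 i1 + S i1 i2 != 0 /\ S i1 i1 - S i1 i2 != 0.
Proof.
move=> Su H.
have e1 := H i0 i1 i0. have e2 := H i0 i1 i1. have e3 := H i0 i1 i2.
have e4 := H i0 i2 i1. have e5 := H i1 i2 i1.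
move: e1 e2 e3 e4 e5; rewrite !sum3 /= /bianchiIII /sc_of /Defs.zero3 /vec3 /=.
have c1 := @coldep S (-1) Su. have c2 := @coldep S 1 Su.
move: c1 c2.
set s00 := S i0 i0; set s01 := S i0 i1; set s02 := S i0 i2;
set s10 := S i1 i0; set s11 := S i1 i1; set s12 := S i1 i2;
set s20 := S i2 i0; set s21 := S i2 i1; set s22 := S i2 i2.
have cols : forall P : 'I_3 -> Prop, P i0 -> P i1 -> P i2 -> forall k, P k.
  by move=> P p0 p1 p2 k; case: (ord3_cases k) => [->|[->|->]].
move=> c1 c2 e1 e2 e3 e4 e5.
have h02 : s02 = - s01 by lra.
have hmu : s21 + s22 = s11 + s12 by lra.
have key : s01 * (s11 + s12) = 0 by nra.
have hmu0 : s11 + s12 != 0.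
  apply/eqP => hm; apply: c1; apply: cols; rewrite -/s01 -/s02 -/s11 -/s12 -/s21 -/s22; lra.
have h01 : s01 = 0.
  by move/eqP: key; rewrite mulf_eq0 (negbTE hmu0) orbF => /eqP.
have h02' : s02 = 0 by lra.
have hsum : s00 * (s11 + s12) = s11 + s12 by nra.
have h00 : s00 = 1.
  apply/eqP; rewrite -subr_eq0; apply/eqP.
  have : (s00 - 1) * (s11 + s12) = 0 by rewrite mulrBl hsum mul1r subrr.
  by move/eqP; rewrite mulf_eq0 (negbTE hmu0) orbF => /eqP.
have h21 : s21 = s12 by nra.
have h22 : s22 = s11 by nra.
split; first by [].
split => //.
apply/eqP => hd; apply: c2; apply: cols; rewrite -/s01 -/s02 -/s11 -/s12 -/s21 -/s22; lra.
Qed.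

Lemma prod_nz (a b : R) : a != 0 -> b != 0 -> a * b = 0 -> False.
Proof. by move=> ha hb /eqP; rewrite mulf_eq0 (negbTE ha) (negbTE hb). Qed.

Lemma one_nz (a : R) : a != 0 -> a = 0 -> False.
Proof. by move=> ha /eqP; rewrite (negbTE ha). Qed.

Lemma cancel_nz (a x y : R) : a != 0 -> a * (x - y) = 0 -> x = y.
Proof.
move=> ha /eqP; rewrite mulf_eq0 (negbTE ha) /= subr_eq0 => /eqP //.
Qed.

Lemma ok_nz (t : dual_case R) : dual_case_ok t ->
  match t with CaseIIIi b => b != 0 | _ => True end.
Proof. by case: t => // b /eqP. Qed.

Lemma uniq_t (f' ft' : sc R) (t1 t2 : dual_case R) :
  dual_case_ok t1 -> dual_case_ok t2 ->
  manin_isomorphic f' ft' (bianchiIII R) (dual_sc t1) ->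
  manin_isomorphic f' ft' (bianchiIII R) (dual_sc t2) -> t1 = t2.
Proof.
move=> ok1 ok2 [A1 [U1 [F1 G1]]] [A2 [U2 [F2 G2]]].
have R1 := transf_relf U1 F1. have R2 := transf_relf U2 F2.
have T1 := transft_relf U1 G1. have T2 := transft_relf U2 G2.
have US : invmx A1 *m A2 \in unitmx by rewrite unitmx_mul unitmx_inv U1 U2.
have RS := relf_comp (relf_inv U1 R1) R2.
have U1t : A1^T \in unitmx by rewrite unitmx_tr.
have TS := relf_comp T2 (relf_inv U1t T1).
rewrite -trmx_inv -trmx_mul in TS.
have [[h00 h01 h02 h21 h22] [hp hm]] := Sstruct US RS.
move: (invmx A1 *m A2) h00 h01 h02 h21 h22 hp hm TS => S h00 h01 h02 h21 h22 hp hm TS.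
have e1 := TS i0 i1 i0. have e2 := TS i0 i1 i1.
have e3 := TS i1 i2 i0. have e4 := TS i1 i2 i1.
move: e1 e2 e3 e4; rewrite !sum3 !mxE h00 h01 h02 h21 h22.
move: (S i1 i0) (S i2 i0) (S i1 i1) (S i1 i2) hp hm => x y p q hp hm.
have nz1 := ok_nz ok1. have nz2 := ok_nz ok2.
clear F1 G1 F2 G2 T1 T2 R1 R2 TS.
case: t1 ok1 nz1 => [| |b1| |] _ nz1; case: t2 ok2 nz2 => [| |b2| |] _ nz2;
  rewrite /dual_sc /sc_of /Defs.zero3 /vec3 /= => e1 e2 e3 e4.
all: first [ done
 | (apply: f_equal; apply: (cancel_nz hp); lra)
 | (exfalso; lra)
 | (exfalso; apply: (one_nz hp); lra)
 | (exfalso; apply: (prod_nz hp hm); lra)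
 | (exfalso; apply: (prod_nz hp nz1); lra)
 | (exfalso; apply: (prod_nz hp nz2); lra) ].
Qed.
End E.

Theorem mainTheorem7 (R : realType) (f' ft' : sc R) :
  manin_triple f' ft' ->
  lie_isomorphic f' (bianchiIII R) ->
  exists! t : dual_case R,
    dual_case_ok t /\
    manin_triple (bianchiIII R) (dual_sc t) /\
    manin_isomorphic f' ft' (bianchiIII R) (dual_sc t).
Proof.
move=> M L.
have [t [ok [mt iso]]] := existence M L.
exists t; split => // t' [ok' [_ iso']].
exact: uniq_t ok ok' iso iso'.
Qed.
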